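(* Let $(\Omega,\Sigma,\mathbb P)$ be any probability space. The Banach couple $(\ell_1,\ell_2)$ is not $\mathcal K$-closed representable in the Banach couple $(L_\infty(\Omega),L_2(\Omega))$.
   Context: For a Banach couple $(X_0,X_1)$, $x\in X_0+X_1$ and $t>0$, $\mathcal K(t,x;X_0,X_1)=\inf\{\|x_0\|_{X_0}+t\|x_1\|_{X_1}: x=x_0+x_1,\ x_0\in X_0,\ x_1\in X_1\}$. A Banach couple $(X_0,X_1)$ is $\mathcal K$-closed representable in a Banach couple $(Y_0,Y_1)$ if there is a linear operator $T:X_0+X_1\to Y_0+Y_1$ which is injective and bounded from $X_0$ into $Y_0$ and from $X_1$ into $Y_1$, and a constant $C>0$ such that $C^{-1}\mathcal K(t,x;X_0,X_1)\le\mathcal K(t,Tx;Y_0,Y_1)\le C\,\mathcal K(t,x;X_0,X_1)$ for all $x\in X_0+X_1$ and $t>0$. *)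

(* Defs.v *)
From HB Require Import structures.
From mathcomp Require Import all_boot all_order all_algebra.
From mathcomp Require Import all_classical all_reals all_analysis.
Set Implicit Arguments. Unset Strict Implicit. Unset Printing Implicit Defensive.
Import Order.TTheory GRing.Theory Num.Theory.
Local Open Scope classical_set_scope.
Local Open Scope ring_scope.

Section Couples.
Context {R : realType}.
Local Open Scope ereal_scope.

Definition lnorm (p : \bar R) (x : nat -> R) : \bar R :=
  'N[counting]_p[EFin \o x].

Definition l1_plus_l2 : set (nat -> R) :=
  [set x | exists x0 : nat -> R,
     lnorm 1 x0 < +oo /\ lnorm 2%:E (fun n => (x n - x0 n)%R) < +oo].

Definition K_l1l2 (t : R) (x : nat -> R) : \bar R :=
  ereal_inf [set lnorm 1 x0 + t%:E * lnorm 2%:E (fun n => (x n - x0 n)%R)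
            | x0 in [set: nat -> R]].

Context {d : measure_display} {Omega : measurableType d}.
Variable P : probability Omega R.

Definition Linf_norm (f : Omega -> R) : \bar R := 'N[P]_+oo[EFin \o f].
Definition L2_norm (f : Omega -> R) : \bar R := 'N[P]_2%:E[EFin \o f].

(** the sum space L_oo + L_2 (elements are measurable functions; they are
    identified up to P-a.e. equality wherever it matters below) *)
Definition Linf_plus_L2 : set (Omega -> R) :=
  [set f : Omega -> R | measurable_fun [set: Omega] f /\
     exists g0 : Omega -> R, measurable_fun [set: Omega] g0 /\
       Linf_norm g0 < +oo /\ L2_norm (fun w => (f w - g0 w)%R) < +oo].

Definition K_LinfL2 (t : R) (f : Omega -> R) : \bar R :=
  ereal_inf [set Linf_norm g0 + t%:E * L2_norm (fun w => (f w - g0 w)%R)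
            | g0 in [set g : Omega -> R | measurable_fun [set: Omega] g]].

(** The operator T acts on l_1 + l_2 and takes values in L_oo + L_2, whose
    elements are classes modulo P-a.e. equality: linearity and injectivity
    are therefore understood modulo P-a.e. equality. *)
Definition K_closed_representable_l1l2_LinfL2 : Prop :=
  exists T : (nat -> R) -> (Omega -> R),
    (forall x, l1_plus_l2 x -> Linf_plus_L2 (T x)) /\
    (forall x y (a b : R), l1_plus_l2 x -> l1_plus_l2 y ->
       T (fun n => a * x n + b * y n)%R = (fun w => a * T x w + b * T y w)%R
         %[ae P]) /\
    (forall x y, l1_plus_l2 x -> l1_plus_l2 y ->
       T x = T y %[ae P] -> x = y) /\
    (exists C : R, (0 < C)%R /\ forall x, lnorm 1 x < +oo ->
       Linf_norm (T x) <= C%:E * lnorm 1 x) /\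
    (exists C : R, (0 < C)%R /\ forall x, lnorm 2%:E x < +oo ->
       L2_norm (T x) <= C%:E * lnorm 2%:E x) /\
    (exists C : R, (0 < C)%R /\ forall x (t : R), l1_plus_l2 x -> (0 < t)%R ->
       C^-1%:E * K_l1l2 t x <= K_LinfL2 t (T x) /\
       K_LinfL2 t (T x) <= C%:E * K_l1l2 t x).

End Couples.

(* Main.v *)
Require Import Defs.
From HB Require Import structures.
From mathcomp Require Import all_boot all_order all_algebra.
From mathcomp Require Import all_classical all_reals all_analysis.
From mathcomp Require Import ring lra ess_sup_inf measurable_realfun.
Set Implicit Arguments. Unset Strict Implicit. Unset Printing Implicit Defensive.
Import Order.TTheory GRing.Theory Num.Theory.
Local Open Scope classical_set_scope.
Local Open Scope ring_scope.

Section Aux.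
Variable R : realType.

Lemma pt4 (a b c m : R) : 0 < m -> `|b| <= c ->
  (a + b) ^+ 4 + (a - b) ^+ 4 <= 2 * (1 + m^-1) * a ^+ 4 + 2 * (9 * m + 1) * c ^+ 4.
Proof.
move=> m0 bc.
have b2c : b ^+ 2 <= c ^+ 2.
  move: bc; rewrite ler_norml => /andP[h1 h2]; nra.
have b4c : b ^+ 4 <= c ^+ 4.
  have -> : b ^+ 4 = (b ^+ 2) ^+ 2 by rewrite -exprM.
  have -> : c ^+ 4 = (c ^+ 2) ^+ 2 by rewrite -exprM.
  by rewrite ler_pXn2r // nnegrE sqr_ge0.
have key : 12 * a^+2 * b^+2 <= 2 * m^-1 * a^+4 + 18 * m * b^+4.
  have e : 2 * m^-1 * a^+4 + 18 * m * b^+4 - 12 * a^+2 * b^+2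
           = 2 * m^-1 * (a^+2 - 3 * m * b^+2)^+2.
    by field; rewrite gt_eqF.
  rewrite -subr_ge0 e; apply: mulr_ge0; last exact: sqr_ge0.
  by apply: mulr_ge0 => //; rewrite invr_ge0 ltW.
have e2 : (a + b) ^+ 4 + (a - b) ^+ 4 = 2 * a^+4 + 12 * a^+2 * b^+2 + 2 * b^+4
  by ring.
rewrite e2.
have mb : m * b ^+ 4 <= m * c ^+ 4 by rewrite ler_pM2l.
have h : 2 * (1 + m^-1) * a ^+ 4 + 2 * (9 * m + 1) * c ^+ 4 =
   2 * a^+4 + 2 * m^-1 * a^+4 + 18 * (m * c^+4) + 2 * c^+4 by ring.
rewrite h; lra.
Qed.

Lemma clamp_sq (a M : R) : 0 < M ->
  (a - Num.max (- M) (Num.min M a)) ^+ 2 * M ^+ 2 <= a ^+ 4.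
Proof.
move=> M0.
have a4 : a ^+ 4 = a^+2 * a^+2 by rewrite -exprD.
rewrite a4.
case: (lerP a M) => aM; case: (lerP (- M) a) => aM'; try nra.
- have h1 : (a - - M) ^+ 2 <= a ^+ 2 by nra.
  have h2 : M ^+ 2 <= a ^+ 2 by nra.
  by apply: ler_pM => //; apply: sqr_ge0.
- rewrite (_ : Num.max (- M) M = M); last by apply: max_r; lra.
  have h1 : (a - M) ^+ 2 <= a ^+ 2 by nra.
  have h2 : M ^+ 2 <= a ^+ 2 by nra.
  by apply: ler_pM => //; apply: sqr_ge0.
Qed.

End Aux.

Section Aux3.
Variable R : realType.

Lemma cs_sum (u : nat -> R) n :
  (\sum_(j < n) u j) ^+ 2 <= n%:R * \sum_(j < n) (u j) ^+ 2.
Proof.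
elim: n => [|n IH]; first by rewrite !big_ord0 mul0r expr0n.
rewrite !big_ord_recr /=.
set S := \sum_(j < n) u j in IH *; set Q := \sum_(j < n) u j ^+ 2 in IH *.
set v := u n.
have n0 : 0 <= (n%:R : R) by [].
have Q0 : 0 <= Q by apply: sumr_ge0 => i _; apply: sqr_ge0.
have key : n%:R * (2 * S * v) <= n%:R * (Q + n%:R * v ^+ 2).
  have h : 0 <= (S - n%:R * v) ^+ 2 by apply: sqr_ge0.
  nra.
have key2 : 2 * S * v <= Q + n%:R * v ^+ 2.
  case: (posnP n) => [n0'|np].
    move: IH; rewrite n0' mul0r => IH.
    have : S ^+ 2 = 0 by apply/eqP; rewrite eq_le IH sqr_ge0.
    move/eqP; rewrite sqrf_eq0 => /eqP ->; rewrite mulr0 mul0r; nra.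
  by rewrite -(ler_pM2l (_ : 0 < n%:R)) // ltr0n.
rewrite mulrSr; nra.
Qed.

End Aux3.
Section Aux2.
Variable R : realType.
Local Open Scope ereal_scope.

Lemma lnorm1_E (x : nat -> R) :
  lnorm 1 x = \sum_(k <oo) (`|x k|)%:E.
Proof.
rewrite /lnorm Lnorm1 ge0_integral_count //.
Qed.

Lemma lnorm1_fin (x : nat -> R) N : (forall j, (N <= j)%N -> x j = 0%R) ->
  lnorm 1 x = (\sum_(j < N) `|x j|)%:E.
Proof.
move=> x0; rewrite lnorm1_E (nneseries_split 0 N) // add0n.
rewrite eseries0; last by move=> i Ni _; rewrite x0 // normr0.
by rewrite adde0 big_mkord sumEFin.
Qed.

Lemma lnorm1_ge (x : nat -> R) N :
  (\sum_(j < N) `|x j|)%:E <= lnorm 1 x.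
Proof.
rewrite lnorm1_E -sumEFin.
rewrite -(big_mkord xpredT (fun j => (`|x j|)%:E)).
by apply: nneseries_lim_ge.
Qed.

Lemma lnorm2_E (y : nat -> R) :
  lnorm 2%:E y = (\sum_(k <oo) ((y k)^+2)%:E) `^ 2^-1.
Proof.
rewrite /lnorm Lnorm_counting //; congr (_ `^ _).
apply: eq_eseriesr => k _ /=.
by rewrite powR_mulrn // real_normK // num_real.
Qed.

Lemma le_sqrte (e : \bar R) (r : R) : 0 <= e -> (0 <= r)%R -> (r^+2)%:E <= e ->
  r%:E <= e `^ 2^-1.
Proof.
move=> e0 r0 h.
have -> : r%:E = (r^+2)%:E `^ 2^-1.
  by rewrite poweR_EFin powR12_sqrt ?sqr_ge0 // sqrtr_sqr ger0_norm.
apply: gt0_ler_poweR => //; rewrite ?in_itv /= ?lee_fin ?sqr_ge0 ?leey ?e0 //.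
Qed.

Lemma ge_sqrte (e : \bar R) (r : R) : 0 <= e -> (0 <= r)%R -> e <= (r^+2)%:E ->
  e `^ 2^-1 <= r%:E.
Proof.
move=> e0 r0 h.
have -> : r%:E = (r^+2)%:E `^ 2^-1.
  by rewrite poweR_EFin powR12_sqrt ?sqr_ge0 // sqrtr_sqr ger0_norm.
apply: gt0_ler_poweR => //; rewrite ?in_itv /= ?lee_fin ?sqr_ge0 ?leey ?e0 //.
Qed.

Lemma lnorm2_ge (y : nat -> R) N r : (0 <= r)%R ->
  (r^+2 <= \sum_(j<N) (y j)^+2)%R -> r%:E <= lnorm 2%:E y.
Proof.
move=> r0 h; rewrite lnorm2_E; apply: le_sqrte => //.
  by apply: nneseries_ge0 => n _ _; rewrite lee_fin sqr_ge0.
apply: le_trans (_ : (\sum_(j < N) (y j)^+2)%:E <= _).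
  by rewrite lee_fin.
rewrite -sumEFin -(big_mkord xpredT (fun j => ((y j)^+2)%:E)).
by apply: nneseries_lim_ge => n _ _; rewrite lee_fin sqr_ge0.
Qed.

Lemma lnorm2_0 : @lnorm R 2%:E (fun _ : nat => 0%R) = 0.
Proof.
rewrite /lnorm (@eq_Lnorm _ _ R counting _ _ (cst 0%:E)) ?Lnorm0 //.
Qed.

End Aux2.

Definition xv {R : realType} (eps : nat -> R) (k : nat) : nat -> R :=
  fun j => if (j < k)%N then eps j else 0%R.

Section Kl.
Variable R : realType.
Local Open Scope ereal_scope.

Lemma Kl_lower (eps : nat -> R) (m : nat) : (forall j, eps j = 1%R \/ eps j = (-1)%R) ->
  ((m * m)%:R)%:E <= K_l1l2 m%:R (xv eps (m * m)).
Proof.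
move=> heps; apply: le_ereal_inf_tmp => z [x0 _ <-].
set n := (m * m)%N.
set a := (\sum_(j < n) `|x0 j|)%R.
set y := (fun k => xv eps n k - x0 k)%R.
set Q := (\sum_(j < n) (y j)^+2)%R.
have Q0 : (0 <= Q)%R by apply: sumr_ge0 => i _; apply: sqr_ge0.
set b := Num.sqrt Q.
have b0 : (0 <= b)%R by apply: sqrtr_ge0.
have h1 : a%:E <= lnorm 1 x0 by apply: lnorm1_ge.
have h2 : b%:E <= lnorm 2%:E y.
  apply: (@lnorm2_ge _ _ n) => //; rewrite sqr_sqrtr //.
apply: le_trans (_ : a%:E + m%:R%:E * b%:E <= _); last first.
  apply: leeD => //; apply: lee_wpmul2l => //; rewrite lee_fin //.
rewrite -EFinM -EFinD lee_fin.
set s := (\sum_(j < n) `|y j|)%R.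
have hs : (n%:R - a <= s)%R.
  have -> : (n%:R = \sum_(j < n) (1 : R))%R by rewrite sumr_const card_ord.
  rewrite /a /s -sumrB; apply: ler_sum => i _.
  rewrite /y /xv ltn_ord.
  have e1 : (`|eps i| = 1)%R by case: (heps i) => ->; rewrite ?normrN normr1.
  have := lerB_dist (eps i) (x0 i); rewrite e1 => h; lra.
have hcs : (s ^+ 2 <= n%:R * Q)%R.
  have := cs_sum (fun j => `|y j|)%R n.
  rewrite (_ : (\sum_(j < n) `|y j| ^+ 2 = Q)%R) //.
  by rewrite /Q; apply: eq_bigr => i _; rewrite real_normK ?num_real.
have s0 : (0 <= s)%R by apply: sumr_ge0.
have hmb : (s <= m%:R * b)%R.
  have e : (n%:R * Q = (m%:R * b) ^+ 2)%R.
    by rewrite exprMn sqr_sqrtr // /n natrM expr2.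
  rewrite e in hcs.
  rewrite -(ler_pXn2r (_ : (0 < 2)%N)) // nnegrE // mulr_ge0 //.
rewrite natrM; move: hs hmb; rewrite /n natrM; lra.
Qed.

End Kl.

Section PSide.
Variables (R : realType) (d : measure_display) (Omega : measurableType d).
Variable P : probability Omega R.
Local Open Scope ereal_scope.

Lemma P_gt0 : 0 < P [set: Omega].
Proof. by rewrite probability_setT lte01. Qed.

Lemma Linf_le (h : Omega -> R) (M : R) : (forall w, (`|h w| <= M)%R) ->
  Linf_norm P h <= M%:E.
Proof.
move=> hM; rewrite /Linf_norm unlock /= P_gt0.
apply/ess_supP; apply: nearW => w /=; rewrite lee_fin; exact: hM.
Qed.

Lemma Linf_ae (h : Omega -> R) (M : R) : Linf_norm P h <= M%:E ->
  {ae P, forall w, (`|h w| <= M)%R}.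
Proof.
rewrite /Linf_norm unlock /= P_gt0 => /ess_supP.
by apply: filterS => w /=; rewrite lee_fin.
Qed.

Lemma L2_le (h : Omega -> R) (r : R) : (0 <= r)%R ->
  \int[P]_w ((h w)^+2)%R%:E <= (r^+2)%R%:E -> L2_norm P h <= r%:E.
Proof.
move=> r0 hi; rewrite /L2_norm unlock /=.
have -> : \int[P]_x (`|(EFin \o h) x| `^ 2) = \int[P]_w ((h w)^+2)%R%:E.
  apply: eq_integral => w _ /=.
  by rewrite powR_mulrn // real_normK // num_real.
apply: ge_sqrte => //.
by apply: integral_ge0 => w _; rewrite lee_fin sqr_ge0.
Qed.


Lemma mEX (h : Omega -> R) n : measurable_fun setT h ->
  measurable_fun setT (fun w => ((h w)^+n)%R%:E).
Proof. by move=> mh; apply/measurable_EFinP; exact: measurable_funX. Qed.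

Lemma half_le (x X : \bar R) : 0 <= x -> x + x <= X + X -> x <= X.
Proof.
case: X => [r||]; last 2 first.
- by move=> _ _; rewrite leey.
- case: x => [s||] //= s0; rewrite ?leeNy_eq //.
case: x => [s||] //= s0.
  by rewrite -!EFinD !lee_fin => h; lra.
Qed.

Lemma step4 (F g : Omega -> R) (c m : R) :
  measurable_fun setT F -> measurable_fun setT g -> (0 < m)%R ->
  (forall w, `|g w| <= c)%R ->
  exists s : R, (s = 1 \/ s = -1)%R /\
   \int[P]_w (((F w + s * g w)^+4)%R%:E) <=
   (1 + m^-1)%:E * \int[P]_w ((F w)^+4)%R%:E + ((9 * m + 1) * c^+4)%R%:E.
Proof.
move=> mF mg m0 gc.
set I := \int[P]_w ((F w)^+4)%R%:E.
set a := \int[P]_w ((F w + g w)^+4)%R%:E.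
set b := \int[P]_w ((F w - g w)^+4)%R%:E.
set X := (1 + m^-1)%:E * I + ((9 * m + 1) * c^+4)%R%:E.
have c0 : (0 <= c)%R by apply: le_trans (gc point) ; [].
have I0 : 0 <= I by apply: integral_ge0 => w _; rewrite lee_fin exprn_even_ge0.
have a0 : 0 <= a by apply: integral_ge0 => w _; rewrite lee_fin exprn_even_ge0.
have b0 : 0 <= b by apply: integral_ge0 => w _; rewrite lee_fin exprn_even_ge0.
have mFg : measurable_fun setT (fun w => F w + g w)%R by exact: measurable_funD.
have mFg' : measurable_fun setT (fun w => F w - g w)%R by exact: measurable_funB.
have hsum : a + b <= X + X.
  rewrite /a /b -ge0_integralD //; last 4 first.
  - by move=> w _; rewrite lee_fin exprn_even_ge0.
  - exact: mEX.
  - by move=> w _; rewrite lee_fin exprn_even_ge0.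
  - exact: mEX.
  have -> : X + X = \int[P]_w (((2 * (1 + m^-1))%:E * ((F w)^+4)%R%:E) +
                                 (cst (2 * (9 * m + 1) * c^+4)%:E w)).
    have k0 : (0 <= 2 * (1 + m^-1))%R by rewrite mulr_ge0 // addr_ge0 // invr_ge0 ltW.
    have k1 : (0 <= 2 * (9 * m + 1) * c ^+ 4)%R.
      by rewrite !mulr_ge0 // ?exprn_ge0 // addr_ge0 // mulr_ge0 // ltW.
    have h1 : forall w, [set: Omega] w -> 0 <= (2 * (1 + m^-1))%:E * ((F w)^+4)%R%:E.
      by move=> w _; rewrite mule_ge0 // lee_fin ?exprn_even_ge0.
    have h2 : measurable_fun setT (fun w => (2 * (1 + m^-1))%:E * ((F w)^+4)%R%:E).
      by apply: emeasurable_funM => //; exact: mEX.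
    have h3 : forall w, [set: Omega] w -> 0 <= cst (2 * (9 * m + 1) * c ^+ 4)%R%:E w.
      by move=> w _; rewrite lee_fin.
    rewrite (@ge0_integralD _ _ _ P setT measurableT _ _ h1 h2 h3 (measurable_cst _)).
    have h4 : forall w, [set: Omega] w -> 0 <= ((F w)^+4)%R%:E.
      by move=> w _; rewrite lee_fin exprn_even_ge0.
    rewrite (@ge0_integralZl_EFin _ _ _ P setT measurableT _ h4 (mEX 4 mF) _ k0).
    rewrite integral_cst //; have PT := probability_setT P; rewrite [X in _ + _ * X]PT.
    rewrite /X addeACA -ge0_muleDl ?lee_fin ?addr_ge0 // ?invr_ge0 ?ltW //.
    rewrite -EFinD; congr (_ * _ + _)%E; congr (_%:E); ring.
  apply: ge0_le_integral => //.
  - by move=> w _; rewrite lee_fin addr_ge0 // exprn_even_ge0.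
  - by apply/measurable_EFinP; apply: measurable_funD; apply: measurable_funX.
  - by apply: emeasurable_funD; [apply: emeasurable_funM => //; exact: mEX|].
  - move=> w _; rewrite /= -EFinM -EFinD lee_fin.
    exact: pt4.
case: (leP a b) => ab.
- exists 1%R; split; first by left.
  under eq_integral do rewrite mul1r.
  apply: half_le => //; apply: le_trans hsum; exact: leeD.
- exists (-1)%R; split; first by right.
  under eq_integral do rewrite mulN1r.
  apply: half_le => //; apply: le_trans hsum; rewrite addeC; apply: leeD => //; exact: ltW.
Qed.

End PSide.

Section Fin.
Variable R : realType.
Local Open Scope ereal_scope.

Lemma fin_l1 (x : nat -> R) N : (forall j, (N <= j)%N -> x j = 0%R) -> l1_plus_l2 x.
Proof.
move=> hx; exists x; split; first by rewrite (lnorm1_fin hx) ltry.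
rewrite (_ : (fun n => x n - x n)%R = fun _ => 0%R); last first.
  by apply/funext => n; rewrite subrr.
by rewrite lnorm2_0 ltry.
Qed.

Definition ev (k : nat) : nat -> R := fun j => ((j == k)%:R)%R.

Lemma ev_fin k : forall j, (k.+1 <= j)%N -> ev k j = 0%R.
Proof. by move=> j hj; rewrite /ev; case: eqP => // ejk; move: hj; rewrite ejk ltnn. Qed.

Lemma lnorm_ev k : lnorm 1 (ev k) = 1.
Proof.
rewrite (lnorm1_fin (@ev_fin k)) big_ord_recr /= big1 /ev ?eqxx ?normr1 ?add0r //.
move=> i _; rewrite (_ : (i == k :> nat) = false) ?normr0 //.
by apply/negbTE; rewrite neq_ltn ltn_ord.
Qed.

Lemma xv_fin (eps : nat -> R) k : forall j, (k <= j)%N -> xv eps k j = 0%R.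
Proof. by move=> j hj; rewrite /xv ltnNge hj. Qed.

End Fin.

Lemma clamp_id (R : realType) (a M : R) : `|a| <= M -> Num.max (- M) (Num.min M a) = a.
Proof.
rewrite ler_norml => /andP[h1 h2].
rewrite (_ : Num.min M a = a); last exact: min_r.
exact: max_r.
Qed.

Lemma clamp_bd (R : realType) (a M : R) : 0 <= M -> `|Num.max (- M) (Num.min M a)| <= M.
Proof.
move=> M0; case: (lerP a M) => aM; case: (lerP (- M) a) => aM'; rewrite ?ler_norml; try lra.
rewrite (_ : Num.max (- M) M = M); last by apply: max_r; lra.
lra.
Qed.

Theorem theorem5p1 (R : realType) (d : measure_display) (Omega : measurableType d)
  (P : probability Omega R) :
  ~ K_closed_representable_l1l2_LinfL2 P.
Proof.
move=> [T [hT [hlin [_ [[C1 [C10 hC1]] [_ [C [C0 hK]]]]]]]].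
have mT x : l1_plus_l2 x -> measurable_fun setT (T x) by move=> h; exact: (hT x h).1.
pose ft k := fun w => Num.max (- C1) (Num.min C1 (T (ev R k) w)).
have lev k : l1_plus_l2 (ev R k) := fin_l1 (@ev_fin R k).
have mft k : measurable_fun setT (ft k).
  apply: (measurable_maxr (measurable_cst _)).
  exact: (measurable_minr (measurable_cst _) (mT _ (lev k))).
have bft k w : `|ft k w| <= C1 by apply: clamp_bd; exact: ltW.
have aeft k : T (ev R k) = ft k %[ae P].
  have hfin : (lnorm 1 (ev R k) < +oo)%E by rewrite lnorm_ev ltry.
  have h := hC1 (ev R k) hfin.
  rewrite lnorm_ev mule1 in h.
  apply: filterS (@Linf_ae _ _ _ P _ _ h) => w hw _.
  by rewrite /ft clamp_id.
pose D := C1 ^+ 4; pose A := 10 * D.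
have D0 : 0 <= D by rewrite /D exprn_ge0 // ltW.
have A0 : 0 <= A by rewrite /A mulr_ge0.
have ind : forall k, exists eps : nat -> R, (forall j, eps j = 1 \/ eps j = -1) /\
   exists G : Omega -> R, [/\ measurable_fun setT G, T (xv eps k) = G %[ae P] &
     (\int[P]_w ((G w)^+4)%:E <= (A * k%:R^+2)%:E)%E].
  elim => [|k [eps [heps [G [mG aeG IG]]]]].
  - exists (fun _ => 1); split; first by left.
    exists (fun _ => 0); split.
    + exact: measurable_cst.
    + have l0 := fin_l1 (@xv_fin R (fun _ : nat => 1 : R) 0).
      have := hlin _ _ 0 0 l0 l0.
      have e0 : (fun n => 0 * xv (fun _ : nat => 1 : R) 0 n + 0 * xv (fun _ : nat => 1 : R) 0 n)
                   = xv (fun _ : nat => 1 : R) 0.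
        by apply/funext => n; rewrite !mul0r addr0 /xv.
      rewrite e0.
      by apply: filterS => w h /h ->; rewrite !mul0r addr0.
    + under eq_integral do rewrite expr0n /=.
      by rewrite integral0 expr0n /= mulr0.
  - have [s [hs hI]] := @step4 _ _ _ P G (ft k) C1 k.+1%:R mG (mft k) (ltr0Sn _ _) (bft k).
    exists (fun j => if j == k then s else eps j); split.
      by move=> j; case: eqP => _; [exact: hs | exact: heps].
    exists (fun w => G w + s * ft k w); split.
    + apply: measurable_funD => //; apply: measurable_funM => //; exact: measurable_cst.
    + have e1 : xv (fun j => if j == k then s else eps j) k.+1 =
                (fun n => 1 * xv eps k n + s * ev R k n).
        apply/funext => n; rewrite /xv /ev ltnS.
        case: (ltngtP n k) => [nk|kn|e].
        * by rewrite /= ?mul1r ?mulr0 ?mulr1 ?addr0 ?add0r.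
        * by rewrite /= ?mul1r ?mulr0 ?mulr1 ?addr0 ?add0r.
        * by rewrite /= ?mul1r ?mulr0 ?mulr1 ?addr0 ?add0r.
      rewrite e1.
      have hl := hlin (xv eps k) (ev R k) 1 s (fin_l1 (@xv_fin R eps k)) (lev k).
      move: hl aeG (aeft k); apply: filterS3 => w h1 h2 h3 _.
      by rewrite h1 // h2 // h3 // mul1r.
    + apply: le_trans hI _.
      apply: le_trans (_ : ((1 + k.+1%:R^-1)%:E * (A * k%:R ^+ 2)%:E +
                             ((9 * k.+1%:R + 1) * C1 ^+ 4)%:E <= _)%E).
        apply: leeD2r; apply: lee_wpmul2l => //.
      rewrite -EFinM -EFinD lee_fin -natr1.
      set K := k%:R.
      have K0 : 0 <= K by [].
      have hk : (K + 1)^-1 * K ^+ 2 <= K.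
        have -> : (K + 1)^-1 * K ^+ 2 = K - K * (K + 1)^-1.
          by field; lra.
        have : 0 <= K * (K + 1)^-1 by rewrite mulr_ge0 // invr_ge0; lra.
        lra.
      have hA : A * ((K + 1)^-1 * K ^+ 2) <= A * K by rewrite ler_wpM2l.
      rewrite -/D /A.
      have e2 : (1 + (K + 1)^-1) * (10 * D * K ^+ 2) =
                10 * D * K ^+ 2 + 10 * D * ((K + 1)^-1 * K ^+ 2) by ring.
      rewrite e2; move: hA; rewrite /A => hA.
      have DK : 0 <= D * K by rewrite mulr_ge0.
      nra.
pose r := 2 * C * (A + 1).
have r0 : 0 <= r by rewrite /r; apply: mulr_ge0; [apply: mulr_ge0; lra | lra].
pose m := (Num.bound (2 * C * r)).+1.
have hm0 : (0 < m%:R :> R) by rewrite ltr0Sn.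
have hmr : 2 * C * r < m%:R.
  apply: lt_le_trans (archi_boundP _) _; first by rewrite mulr_ge0 // mulr_ge0 // ltW.
  by rewrite ler_nat.
have [eps [heps [G [mG aeG IG]]]] := ind (m * m)%N.
set n := (m * m)%N in IG aeG.
set x := xv eps n in aeG.
have lx : l1_plus_l2 x := fin_l1 (@xv_fin R eps n).
have Kl := Kl_lower m heps.
have [hK1 _] := hK x m%:R lx hm0.
have hn : n%:R = m%:R * m%:R :> R by rewrite /n natrM.
pose M := n%:R / (2 * C).
have M0 : 0 < M by rewrite /M divr_gt0 // ?hn ?mulr_gt0.
pose g0 := fun w => Num.max (- M) (Num.min M (G w)).
have mg0 : measurable_fun setT g0.
  exact: (measurable_maxr (measurable_cst _) (measurable_minr (measurable_cst _) mG)).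
have Lg0 : (Linf_norm P g0 <= M%:E)%E.
  by apply: Linf_le => w; apply: clamp_bd; exact: ltW.
have L2b : (L2_norm P (fun w => (T x w - g0 w)%R) <= r%:E)%E.
  apply: L2_le => //.
  apply: le_trans (_ : \int[P]_w (((M ^+ 2)^-1 * (G w)^+4)%:E) <= _)%E.
    apply: ae_ge0_le_integral => //.
    - by move=> w _; rewrite lee_fin sqr_ge0.
    - by apply: mEX; apply: measurable_funB => //; exact: mT.
    - by move=> w _; rewrite lee_fin; apply: mulr_ge0; [rewrite invr_ge0 exprn_ge0 // ltW | exact: exprn_even_ge0].
    - apply/measurable_EFinP; apply: measurable_funM; first exact: measurable_cst.
      exact: measurable_funX.
    - move: aeG; apply: filterS => w hw _; rewrite lee_fin hw //.
      rewrite mulrC ler_pdivlMr ?exprn_gt0 //.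
      exact: clamp_sq.
  under eq_integral do rewrite EFinM.
  rewrite ge0_integralZl_EFin //; last 3 first.
  - by move=> w _; rewrite lee_fin exprn_even_ge0.
  - exact: mEX.
  - by rewrite invr_ge0 exprn_ge0 // ltW.
  apply: le_trans (_ : ((M ^+ 2)^-1)%:E * (A * n%:R ^+ 2)%:E <= _)%E.
    by apply: lee_wpmul2l => //; rewrite lee_fin invr_ge0 exprn_ge0 // ltW.
  rewrite -EFinM lee_fin.
  have e : (M ^+ 2)^-1 * (A * n%:R ^+ 2) = 4 * C ^+ 2 * A.
    rewrite /M; field; apply/andP; split; rewrite ?hn ?mulf_neq0 // gt_eqF //.
  rewrite e /r; nra.
have KL : (K_LinfL2 P m%:R (T x) <= M%:E + m%:R%:E * r%:E)%E.
  apply: ge_ereal_inf.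
  exists (Linf_norm P g0 + m%:R%:E * L2_norm P (fun w => (T x w - g0 w)%R))%E.
    by exists g0.
  by apply: leeD => //; apply: lee_wpmul2l => //; rewrite lee_fin ltW.
have chain : ((C^-1 * n%:R)%:E <= M%:E + m%:R%:E * r%:E)%E.
  apply: le_trans KL; apply: le_trans hK1.
  rewrite EFinM; apply: lee_wpmul2l; first by rewrite lee_fin invr_ge0 ltW.
  exact: Kl.
move: chain; rewrite -EFinM -EFinD lee_fin => chain.
have CC : C * C^-1 = 1 by rewrite mulfV // gt_eqF.
have hM : M * (2 * C) = n%:R by rewrite /M mulfVK // mulf_neq0 // gt_eqF.
have h2 : 2 * C * (C^-1 * n%:R) <= 2 * C * (M + m%:R * r).
  by rewrite ler_pM2l // mulr_gt0.
rewrite hn in hM h2.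
nra.
Qed.
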